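(* Let $n>p$ be positive integers, $A\in\operatorname{Skew}(p)$ and $H\in\mathbb{R}^{(n-p)\times p}$. Then \[ \begin{pmatrix} I_p & A\\ 0 & H\end{pmatrix}\exp_m\begin{pmatrix} A & A^2-H^TH\\ I_p & A\end{pmatrix}\begin{pmatrix} I_p\\ 0\end{pmatrix}=\exp_m\begin{pmatrix} 2A & -H^T\\ H & 0\end{pmatrix}\begin{pmatrix} I_p\\ 0\end{pmatrix}. \]
   Context: $\operatorname{Skew}(p)$ denotes the real skew-symmetric $p\times p$ matrices and $\exp_m$ the matrix exponential. *)

(* Defs.v *)
From HB Require Import structures.
From mathcomp Require Import all_boot all_order all_algebra.
From mathcomp Require Import all_classical all_reals all_analysis.
Set Implicit Arguments. Unset Strict Implicit. Unset Printing Implicit Defensive.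
Import Order.TTheory GRing.Theory Num.Theory.
Import numFieldNormedType.Exports.
Local Open Scope ring_scope.

Definition mexp (R : realType) (k : nat) (M : 'M[R]_k) : 'M[R]_k :=
  limn (series (fun i : nat => (i`!%:R)^-1 *: (M ^+ i))).

Definition skew_symmetric (R : realType) (k : nat) (A : 'M[R]_k) : Prop := trmx A = - A.

(* Main.v *)
Require Import Defs.
From HB Require Import structures.
From mathcomp Require Import all_boot all_order all_algebra.
From mathcomp Require Import all_classical all_reals all_analysis.
Import Order.TTheory GRing.Theory Num.Theory.
From mathcomp Require Import ring.
Import numFieldNormedType.Exports.
Local Open Scope ring_scope.

HB.instance Definition _ (R : realType) (k : nat) := Complete.on 'M[R]_k.

Lemma mx_entry_le {R : realType} {m n : nat} (M : 'M[R]_(m, n)) i j :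
  `|M i j| <= `|M|.
Proof.
rewrite [leRHS]/Num.Def.normr/= mx_normrE.
by apply: le_trans; last exact: (le_bigmax _ _ (i, j)).
Qed.

Lemma mx_norm_le {R : realType} {m n : nat} (M : 'M[R]_(m, n)) c :
  0 <= c -> (forall i j, `|M i j| <= c) -> `|M| <= c.
Proof.
move=> c0 H; rewrite /Num.Def.normr/= mx_normrE (bigmax_le _ c0)//= => -[i j] _.
Qed.

Lemma mulmx_norm {R : realType} {m k n : nat} (A : 'M[R]_(m, k)) (B : 'M[R]_(k, n)) :
  `|A *m B| <= k%:R * `|A| * `|B|.
Proof.
apply: mx_norm_le; first by rewrite !mulr_ge0.
move=> i j; rewrite mxE; apply: le_trans (ler_norm_sum _ _ _) _.
apply: le_trans (_ : \sum_(l < k) `|A| * `|B| <= _).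
  apply: ler_sum => l _; rewrite normrM.
  by apply: ler_pM => //; apply: mx_entry_le.
by rewrite sumr_const card_ord -mulrA mulr_natl.
Qed.

Lemma pow_norm {R : realType} {k : nat} (M : 'M[R]_k) i :
  `|M ^+ i| <= (k%:R * `|M|) ^+ i.
Proof.
elim: i => [|i IH].
  rewrite expr0; apply: mx_norm_le => // a b.
  by rewrite [1]/(1%:M) mxE; case: (a == b); rewrite /= ?normr1 ?normr0.
rewrite !exprS -mulmxE.
apply: le_trans (mulmx_norm _ _) _.
by rewrite ler_wpM2l // mulr_ge0.
Qed.

Lemma mexp_cvg {R : realType} {k : nat} (M : 'M[R]_k) :
  cvgn (series (fun i : nat => (i`!%:R)^-1 *: (M ^+ i))).
Proof.
apply: normed_cvg.
apply: (@series_le_cvg R _ (exp_coeff (k%:R * `|M|))).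
- by move=> i /=; exact: normr_ge0.
- by move=> i; apply: exp_coeff_ge0; rewrite mulr_ge0.
- move=> i; rewrite /exp_coeff /= normrZ mulrC.
  rewrite ger0_norm ?invr_ge0 //.
  by apply: ler_wpM2r; [rewrite invr_ge0 | apply: pow_norm].
- exact: is_cvg_series_exp_coeff.
Qed.

Local Open Scope classical_set_scope.
Lemma cvg_mul2 {R : realType} {a b c d : nat} (u : nat -> 'M[R]_(a, b)) l
  (L : 'M[R]_(c, a)) (E : 'M[R]_(b, d)) :
  u @ \oo --> l -> (fun n => L *m u n *m E) @ \oo --> L *m l *m E.
Proof.
move=> ul; apply/cvgrPdist_lt => e e0.
set K := b%:R * (a%:R * `|L|) * `|E| + 1.
have K0 : 0 < K by rewrite ltr_wpDl // !mulr_ge0.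
have H := (cvgrPdist_lt _ _).1 ul (e / K) (divr_gt0 e0 K0).
near=> x.
have hx : `|l - u x| < e / K by near: x; apply: H.
rewrite -mulmxBl -mulmxBr.
apply: le_lt_trans (mulmx_norm _ _) _.
apply: (@le_lt_trans _ _ (K * `|l - u x|)).
  apply: le_trans (_ : b%:R * (a%:R * `|L| * `|l - u x|) * `|E| <= _).
    rewrite ler_wpM2r // ler_wpM2l //; exact: mulmx_norm.
  have -> : b%:R * (a%:R * `|L| * `|l - u x|) * `|E| =
            (b%:R * (a%:R * `|L|) * `|E|) * `|l - u x| by ring.
  by rewrite /K mulrDl mul1r lerDl.
by rewrite mulrC -ltr_pdivlMr.
Unshelve. all: by end_near. Qed.

Lemma intertwine {R : realType} {p q : nat} (A : 'M[R]_p) (H : 'M[R]_(q, p)) :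
  block_mx 1%:M A 0 H *m block_mx A (A *m A - (trmx H) *m H) 1%:M A
  = block_mx (2%:R *: A) (- (trmx H)) H (0 : 'M[R]_q) *m block_mx 1%:M A 0 H.
Proof.
rewrite !mulmx_block !mul1mx !mulmx1 !mul0mx !mulmx0 !add0r !addr0.
rewrite -!scalemxAl scaler_nat mulr2n mulNmx.
congr block_mx.
by rewrite addrAC -[2%:R]/(1 + 1) scalerDl scale1r.
Qed.

Lemma series_mul2 {R : realType} {a b c d : nat} (L : 'M[R]_(c, a)) (E : 'M[R]_(b, d))
  (u : nat -> 'M[R]_(a, b)) N :
  L *m series u N *m E = series (fun i => L *m u i *m E) N.
Proof.
by rewrite /series /= mulmx_sumr mulmx_suml; apply: eq_bigr => i _.
Qed.

Local Close Scope classical_set_scope.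

Theorem lemma3p2 (R : realType) (n p : nat) (hp : (0 < p)%N) (hnp : (p < n)%N)
  (A : 'M[R]_p) (H : 'M[R]_(n - p, p)) (hA : skew_symmetric A) :
  block_mx 1%:M A 0 H
    *m mexp (block_mx A (A *m A - (trmx H) *m H) 1%:M A)
    *m col_mx (1%:M : 'M[R]_p) (0 : 'M[R]_(p, p))
  = mexp (block_mx (2%:R *: A) (- (trmx H)) H (0 : 'M[R]_(n - p)))
    *m col_mx (1%:M : 'M[R]_p) (0 : 'M[R]_(n - p, p)).
Proof.
rewrite /mexp.
set L := block_mx _ _ _ _.
set M1 := block_mx A _ _ _.
set M2 := block_mx _ _ H _.
set E1 := col_mx _ _.
set E2 := col_mx _ _.
have hL : forall i, L *m M1 ^+ i = M2 ^+ i *m L.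
  elim=> [|i IH]; first by rewrite !expr0 mulmx1 mul1mx.
  by rewrite !exprSr -!mulmxE mulmxA IH -mulmxA intertwine mulmxA.
have hE : L *m E1 = E2.
  by rewrite /L /E1 mul_block_col !mul1mx !mulmx0 !mul0mx addr0 add0r.
have h1 := cvg_mul2 _ _ L E1 (mexp_cvg M1).
have h2 := cvg_mul2 _ _ 1%:M E2 (mexp_cvg M2).
rewrite -(cvg_lim (@norm_hausdorff _ _) h1).
have eqf : (fun N => L *m series (fun i : nat => i`!%:R^-1 *: M1 ^+ i) N *m E1)
  = (fun N => 1%:M *m series (fun i : nat => i`!%:R^-1 *: M2 ^+ i) N *m E2).
  apply: funext => N /=.
  rewrite !series_mul2; congr series; apply: funext => i /=.
  by rewrite -!scalemxAr -!scalemxAl mul1mx hL -mulmxA hE.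
rewrite eqf (cvg_lim (@norm_hausdorff _ _) h2) //.
by rewrite mul1mx.
Qed.
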